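(* Let $X,Y,A,B$ be non-empty finite sets. Then $\mathcal R_{\rm lowc}$ is a resource over $(X\times Y,A\times B)$ and $\mathsf{QC}(\mathcal R_{\rm lowc})=\mathcal Q_{\rm lowc}$.
   Context: For $n\in\mathbb N$, finite sets $S_i,T_i$, operators $U_i:\mathbb C^X\to\mathbb C^A\otimes\mathbb C^{S_i}$ with $\sum_{i=1}^nU_i^*U_i=I_X$ and isometries $V_i:\mathbb C^Y\to\mathbb C^B\otimes\mathbb C^{T_i}$, the column $[U_i\otimes V_i]_{i=1}^n:\mathbb C^{XY}\to\bigoplus_i\mathbb C^{AB}\otimes\mathbb C^{S_i}\otimes\mathbb C^{T_i}\cong\mathbb C^{AB}\otimes K$ with $K=\bigoplus_i\mathbb C^{S_i}\otimes\mathbb C^{T_i}$ is an isometry, regarded as a block operator isometry over $(XY,AB)$ with entries in $\mathcal B(\mathbb C,K)$. $\mathcal R_{\rm lowc}$ is the set of all finite entrywise direct sums of such isometries. A block operator isometry over $(Z,C)$ is an isometry $W=(W_{c,z}):H^Z\to L^C$; $\phi_W:\mathcal S_1^{C,Z}\to\mathcal B(H,L)$, $\phi_W(e_ze_c^* )=W_{c,z}$; for a normal state $\sigma$, $\Gamma_{W,\sigma}(\epsilon_{z,z'})=\sum_{c,c'}\sigma(W_{c,z}^*W_{c',z'})\epsilon_{c,c'}$ and $\mathsf{QC}(\mathcal R)=\{\Gamma_{W,\sigma}:W\in\mathcal R\}$. A resource over $(Z,C)$ is a family of block operator isometries closed under finite entrywise direct sums and separating: for every nonzero $S\in\mathcal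 S_1^{C,Z}$ (operators $\mathbb C^C\to\mathbb C^Z$) some $W$ in the family has $\phi_W(S)\neq0$. $\mathcal Q_{\rm lowc}$ is the set of channels $\Gamma=\sum_{i=1}^n\Psi_i\otimes\Phi_i:M_{XY}\to M_{AB}$, where $\Psi_i:M_X\to M_A$ are completely positive with $\sum_i\Psi_i$ trace preserving and $\Phi_i:M_Y\to M_B$ are quantum channels. *)

(* Defs.v *)
From HB Require Import structures.
From mathcomp Require Import all_boot all_order all_algebra.
From mathcomp Require Import reals.
From mathcomp Require Import complex.
Set Implicit Arguments. Unset Strict Implicit. Unset Printing Implicit Defensive.
Import Order.TTheory GRing.Theory Num.Theory.
Local Open Scope ring_scope.
Local Open Scope complex_scope.

Section LowC.
Variable R : realType.
Local Notation C := R[i].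

(* A block operator over (Z,Cc) with H = C^h, L = C^l: the family of entries
   W_{c,z} in B(H,L) = 'M_(l,h). *)
Record boi (Z Cc : finType) := Boi {
  bh : nat;
  bl : nat;
  bW : Cc -> Z -> 'M[C]_(bl, bh) }.

Definition adjmx m n (M : 'M[C]_(m, n)) : 'M[C]_(n, m) := (map_mx (@conjc R) M)^T.

(* W : H^Z -> L^C is an isometry: (W^* W)_{z,z'} = sum_c W_{c,z}^* W_{c,z'} = delta_{z,z'} I_H *)
Definition is_isom (Z Cc : finType) (W : boi Z Cc) : Prop :=
  forall z z' : Z,
    \sum_(c : Cc) adjmx (bW W c z) *m bW W c z' = ((z == z')%:R : C)%:M.

Definition dsum (Z Cc : finType) (W1 W2 : boi Z Cc) : boi Z Cc :=
  @Boi Z Cc (bh W1 + bh W2) (bl W1 + bl W2)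
    (fun c z => block_mx (bW W1 c z) 0 0 (bW W2 c z)).

(* phi_W : S_1^{C,Z} -> B(H,L), phi_W(e_z e_c^* ) = W_{c,z}, extended linearly;
   an operator S : C^Cc -> C^Z is given by its matrix entries S z c. *)
Definition phiW (Z Cc : finType) (W : boi Z Cc) (S : Z -> Cc -> C) : 'M[C]_(bl W, bh W) :=
  \sum_(z : Z) \sum_(c : Cc) S z c *: bW W c z.

Definition resource (Z Cc : finType) (F : boi Z Cc -> Prop) : Prop :=
  [/\ (forall W, F W -> is_isom W),
      (forall W1 W2, F W1 -> F W2 -> F (dsum W1 W2)) &
      (forall S : Z -> Cc -> C, (exists z c, S z c != 0) ->
         exists W, F W /\ phiW W S != 0)].

Definition is_state h (sigma : 'M[C]_h -> C) : Prop :=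
  [/\ (forall (a : C) (T T' : 'M[C]_h), sigma (a *: T + T') = a * sigma T + sigma T'),
      (forall T : 'M[C]_h, 0 <= sigma (adjmx T *m T)) &
      sigma 1%:M = 1].

Definition fmx (I : finType) := I -> I -> C.

Definition munit (I : finType) (i i' : I) : fmx I :=
  fun u u' => ((u == i) && (u' == i'))%:R.

Definition ftr (I : finType) (M : fmx I) : C := \sum_(i : I) M i i.

Definition psd (I : finType) (M : fmx I) : Prop :=
  forall v : I -> C, 0 <= \sum_(i : I) \sum_(j : I) (v i)^* * M i j * v j.

Definition lin_map (I J : finType) (Phi : fmx I -> fmx J) : Prop :=
  forall (a : C) (M N : fmx I) (j j' : J),
    Phi (fun i i' => a * M i i' + N i i') j j' = a * Phi M j j' + Phi N j j'.

(* Phi (x) id_{M_n} *)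
Definition ampl (I J : finType) (Phi : fmx I -> fmx J) (n : nat) (M : fmx (I * 'I_n)%type) :
  fmx (J * 'I_n)%type :=
  fun jk jk' => Phi (fun i i' => M (i, jk.2) (i', jk'.2)) jk.1 jk'.1.

Definition cp_map (I J : finType) (Phi : fmx I -> fmx J) : Prop :=
  lin_map Phi /\
  forall (n : nat) (M : fmx (I * 'I_n)%type), psd M -> psd (ampl Phi M).

Definition tp_map (I J : finType) (Phi : fmx I -> fmx J) : Prop :=
  forall M : fmx I, ftr (Phi M) = ftr M.

Definition qchannel (I J : finType) (Phi : fmx I -> fmx J) : Prop :=
  cp_map Phi /\ tp_map Phi.

(* tensor product Psi (x) Phi : M_{XY} -> M_{AB} (linear extension from
   matrix units epsilon_{(x,y),(x',y')} = epsilon_{x,x'} (x) epsilon_{y,y'}) *)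
Definition tensor_map (X Y A B : finType) (Psi : fmx X -> fmx A) (Phi : fmx Y -> fmx B)
  (M : fmx (X * Y)%type) : fmx (A * B)%type :=
  fun ab ab' => \sum_(x : X) \sum_(x' : X) \sum_(y : Y) \sum_(y' : Y)
     M (x, y) (x', y') * Psi (munit x x') ab.1 ab'.1 * Phi (munit y y') ab.2 ab'.2.

Definition chan_eq (I J : finType) (G1 G2 : fmx I -> fmx J) : Prop :=
  forall M i j, G1 M i j = G2 M i j.

Definition GammaW (Z Cc : finType) (W : boi Z Cc) (sigma : 'M[C]_(bh W) -> C)
  (M : fmx Z) : fmx Cc :=
  fun c c' => \sum_(z : Z) \sum_(z' : Z)
     M z z' * sigma (adjmx (bW W c z) *m bW W c' z').

Definition QC (Z Cc : finType) (F : boi Z Cc -> Prop) (G : fmx Z -> fmx Cc) : Prop :=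
  exists W, F W /\ exists sigma : 'M[C]_(bh W) -> C, is_state sigma /\ chan_eq G (GammaW sigma).

(* Generators: n, S_i = 'I_(s i), T_i = 'I_(t i),
   U_i : C^X -> C^A (x) C^{S_i} with entries U i a s x,
   V_i : C^Y -> C^B (x) C^{T_i} with entries V i b t y,
   sum_i U_i^* U_i = I_X, each V_i an isometry; the column [U_i (x) V_i]
   seen as a block operator over (XY,AB) with entries in B(C,K),
   K = (+)_i C^{S_i} (x) C^{T_i} identified with C^l via a bijection f. *)
Definition lowc_gen (X Y A B : finType) (W : boi (X * Y)%type (A * B)%type) : Prop :=
  exists (n : nat) (s t : 'I_n -> nat)
         (U : forall i : 'I_n, A -> 'I_(s i) -> X -> C)
         (V : forall i : 'I_n, B -> 'I_(t i) -> Y -> C)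
         (l : nat) (f : 'I_l -> {i : 'I_n & ('I_(s i) * 'I_(t i))%type}),
    [/\ bijective f,
        (forall x x' : X,
           \sum_(i < n) \sum_(a : A) \sum_(k : 'I_(s i))
              (U i a k x)^* * U i a k x' = (x == x')%:R),
        (forall (i : 'I_n) (y y' : Y),
           \sum_(b : B) \sum_(k : 'I_(t i))
              (V i b k y)^* * V i b k y' = (y == y')%:R) &
        W = @Boi (X * Y)%type (A * B)%type 1 l
              (fun ab xy => \matrix_(k < l, j < 1)
                 let: existT i st := f k in
                 U i ab.1 st.1 xy.1 * V i ab.2 st.2 xy.2)].

Inductive Rlowc (X Y A B : finType) : boi (X * Y)%type (A * B)%type -> Prop :=
| Rlowc_gen W : lowc_gen W -> Rlowc W
| Rlowc_sum W1 W2 : Rlowc W1 -> Rlowc W2 -> Rlowc (dsum W1 W2).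

Definition Qlowc (X Y A B : finType) (G : fmx (X * Y)%type -> fmx (A * B)%type) : Prop :=
  exists (n : nat) (Psi : 'I_n -> fmx X -> fmx A) (Phi : 'I_n -> fmx Y -> fmx B),
    [/\ (forall i, cp_map (Psi i)),
        tp_map (fun M a a' => \sum_(i < n) Psi i M a a'),
        (forall i, qchannel (Phi i)) &
        chan_eq G (fun M ab ab' => \sum_(i < n) tensor_map (Psi i) (Phi i) M ab ab')].

End LowC.

(* Main.v *)
Require Import Defs.
From HB Require Import structures.
From mathcomp Require Import all_boot all_order all_algebra.
From mathcomp Require Import reals complex spectral sesquilinear.
From mathcomp Require Import ring.
Set Implicit Arguments. Unset Strict Implicit. Unset Printing Implicit Defensive.
Import Order.TTheory GRing.Theory Num.Theory Num.Def.
Local Open Scope ring_scope.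

Section P.
Variable R : realType.
Local Notation C := R[i].
Local Open Scope sesquilinear_scope.

Lemma sum_delta (I : finType) (x : I) (g : I -> C) :
  \sum_u ((u == x)%:R * g u) = g x.
Proof.
rewrite (bigD1 x) //= eqxx mul1r big1 ?addr0 // => u; rewrite ?andTb => /negbTE ->; by rewrite mul0r.
Qed.

Lemma sum_delta2 (I : finType) (x : I) (g : I -> C) :
  \sum_u (g u * (u == x)%:R) = g x.
Proof. rewrite -[RHS](sum_delta x); apply: eq_bigr => u _; exact: mulrC. Qed.

Lemma sum_pair (I J : finType) (G : I * J -> C) :
  \sum_p G p = \sum_i \sum_j G (i, j).
Proof. by rewrite pair_bigA; apply: eq_bigr => -[]. Qed.

Lemma ge0_conj (x : C) : 0 <= x -> conjc x = x.
Proof. by move=> /ger0_real /CrealP. Qed.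

Lemma mul_conj_ge0 (x : C) : 0 <= conjc x * x.
Proof. by rewrite mulrC; exact: mul_conjC_ge0. Qed.

Definition Kmap (I J : finType) (s : nat) (K : J -> 'I_s -> I -> C) (c : C) :
  fmx R I -> fmx R J :=
  fun M a a' => c * \sum_x \sum_x' M x x' * \sum_k (conjc (K a k x) * K a' k x').

Lemma Kmap_lin (I J : finType) s (K : J -> 'I_s -> I -> C) c : lin_map (Kmap K c).
Proof.
move=> a M N j j'; rewrite /Kmap.
have -> : \sum_x \sum_x' (a * M x x' + N x x') * \sum_k (conjc (K j k x) * K j' k x')
  = a * (\sum_x \sum_x' M x x' * \sum_k (conjc (K j k x) * K j' k x'))
    + \sum_x \sum_x' N x x' * \sum_k (conjc (K j k x) * K j' k x').
  rewrite mulr_sumr -big_split; apply: eq_bigr => x _.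
  rewrite mulr_sumr -big_split; apply: eq_bigr => x' _.
  by rewrite mulrDl mulrA.
by ring.
Qed.

Lemma sum_delta_pair (I J : finType) (x : I) (x' : J) (g : I -> J -> C) :
  \sum_u \sum_u' (((u == x) && (u' == x'))%:R * g u u') = g x x'.
Proof.
rewrite -(sum_delta x (fun u => g u x')); apply: eq_bigr => u _.
rewrite -(sum_delta x' (fun u' => g u u')) mulr_sumr; apply: eq_bigr => u' _.
by rewrite -mulnb natrM mulrA.
Qed.

Lemma Kmap_munit (I J : finType) s (K : J -> 'I_s -> I -> C) c x x' a a' :
  Kmap K c (munit R x x') a a' = c * \sum_k (conjc (K a k x) * K a' k x').
Proof. by rewrite /Kmap /munit sum_delta_pair. Qed.

Lemma ex3 (I1 I2 I3 : finType) (F : I1 -> I2 -> I3 -> C) :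
  \sum_i1 \sum_i2 \sum_i3 F i1 i2 i3 = \sum_i3 \sum_i1 \sum_i2 F i1 i2 i3.
Proof.
under eq_bigr => ? _ do rewrite exchange_big.
by rewrite exchange_big.
Qed.

Lemma ex4 (I1 I2 I3 I4 : finType) (F : I1 -> I2 -> I3 -> I4 -> C) :
  \sum_i1 \sum_i2 \sum_i3 \sum_i4 F i1 i2 i3 i4 =
  \sum_i4 \sum_i1 \sum_i2 \sum_i3 F i1 i2 i3 i4.
Proof.
under eq_bigr => ? _ do rewrite ex3. by rewrite exchange_big.
Qed.

Lemma ex5 (I1 I2 I3 I4 I5 : finType) (F : I1 -> I2 -> I3 -> I4 -> I5 -> C) :
  \sum_i1 \sum_i2 \sum_i3 \sum_i4 \sum_i5 F i1 i2 i3 i4 i5 =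
  \sum_i5 \sum_i1 \sum_i2 \sum_i3 \sum_i4 F i1 i2 i3 i4 i5.
Proof.
under eq_bigr => ? _ do rewrite ex4. by rewrite exchange_big.
Qed.

Lemma ex6 (I1 I2 I3 I4 I5 I6 : finType) (F : I1 -> I2 -> I3 -> I4 -> I5 -> I6 -> C) :
  \sum_i1 \sum_i2 \sum_i3 \sum_i4 \sum_i5 \sum_i6 F i1 i2 i3 i4 i5 i6 =
  \sum_i6 \sum_i1 \sum_i2 \sum_i3 \sum_i4 \sum_i5 F i1 i2 i3 i4 i5 i6.
Proof.
under eq_bigr => ? _ do rewrite ex5. by rewrite exchange_big.
Qed.

Lemma sum_mul3 (I J : finType) (c m : C) (f : I -> C) (g : J -> C) :
  c * ((\sum_i f i) * m * (\sum_j g j)) = \sum_i \sum_j c * f i * m * g j.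
Proof.
rewrite mulr_suml mulr_suml mulr_sumr; apply: eq_bigr => i _.
rewrite mulr_sumr mulr_sumr; apply: eq_bigr => j _; ring.
Qed.

Lemma Kmap_cp (I J : finType) s (K : J -> 'I_s -> I -> C) c :
  0 <= c -> cp_map (Kmap K c).
Proof.
move=> hc; split; first exact: Kmap_lin.
move=> n M hM v; rewrite /ampl /Kmap /=.
pose w k (q : I * 'I_n) := \sum_a K a k q.1 * v (a, q.2).
have E : \sum_p \sum_p' conjc (v p) * (c * \sum_x \sum_x' M (x, p.2) (x', p'.2) *
      \sum_k (conjc (K p.1 k x) * K p'.1 k x')) * v p'
   = \sum_k c * \sum_q \sum_q' conjc (w k q) * M q q' * w k q'.
  transitivity (\sum_a \sum_j \sum_a' \sum_j' \sum_x \sum_x' \sum_k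
     (c * conjc (v (a, j)) * conjc (K a k x) * M (x, j) (x', j') * K a' k x' * v (a', j'))).
    rewrite sum_pair; apply: eq_bigr => a _; apply: eq_bigr => j _.
    rewrite sum_pair; apply: eq_bigr => a' _; apply: eq_bigr => j' _ /=.
    rewrite !mulr_sumr mulr_suml; apply: eq_bigr => x _.
    rewrite !mulr_sumr mulr_suml; apply: eq_bigr => x' _.
    rewrite !mulr_sumr mulr_suml; apply: eq_bigr => k _.
    by ring.
  transitivity (\sum_k \sum_x \sum_j \sum_x' \sum_j' \sum_a \sum_a'
     (c * conjc (v (a, j)) * conjc (K a k x) * M (x, j) (x', j') * K a' k x' * v (a', j'))); last first.
    apply: eq_bigr => k _; rewrite mulr_sumr.
    rewrite sum_pair; apply: eq_bigr => x _; apply: eq_bigr => j _.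
    rewrite mulr_sumr sum_pair; apply: eq_bigr => x' _; apply: eq_bigr => j' _ /=.
    rewrite /w rmorph_sum /= sum_mul3; apply: eq_bigr => a _; apply: eq_bigr => a' _.
    by rewrite !rmorphM /=; ring.
  rewrite [in RHS]ex6; apply: eq_bigr => a _.
  rewrite [in RHS]ex3; apply: eq_bigr => j _.
  rewrite [in RHS]ex5; apply: eq_bigr => a' _.
  rewrite [in RHS]ex4; apply: eq_bigr => j' _.
  rewrite [in LHS]ex3; done.
rewrite E; apply: sumr_ge0 => k _; apply: mulr_ge0 => //; exact: hM.
Qed.

Lemma ftr_sum (J : finType) n (F : 'I_n -> fmx R J) :
  ftr (fun a a' => \sum_(i < n) F i a a') = \sum_(i < n) ftr (F i).
Proof. by rewrite /ftr exchange_big. Qed.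

Lemma Kmap_tr (I J : finType) s (K : J -> 'I_s -> I -> C) c M :
  ftr (Kmap K c M) =
  c * \sum_x \sum_x' M x x' * (\sum_a \sum_k conjc (K a k x) * K a k x').
Proof.
rewrite /ftr /Kmap -mulr_sumr; congr (c * _).
rewrite exchange_big; apply: eq_bigr => x _.
rewrite exchange_big; apply: eq_bigr => x' _.
by rewrite mulr_sumr.
Qed.

Lemma delta_ftr (I : finType) (M : fmx R I) (S : I -> I -> C) :
  (forall x x', S x x' = (x == x')%:R) ->
  \sum_x \sum_x' M x x' * S x x' = ftr M.
Proof.
move=> hS; rewrite /ftr; apply: eq_bigr => x _.
under eq_bigr => x' _ do rewrite hS eq_sym.
exact: sum_delta2.
Qed.

Lemma Kmap_qchannel (I J : finType) s (K : J -> 'I_s -> I -> C) :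
  (forall x x', \sum_a \sum_k conjc (K a k x) * K a k x' = (x == x')%:R) ->
  qchannel (Kmap K 1).
Proof.
move=> hK; split; first exact: Kmap_cp.
by move=> M; rewrite Kmap_tr mul1r delta_ftr.
Qed.

Lemma Kmap_tr_sum (I J : finType) n (s : 'I_n -> nat)
   (U : forall i : 'I_n, J -> 'I_(s i) -> I -> C) c M :
  (forall x x', \sum_(i < n) \sum_a \sum_(k : 'I_(s i)) conjc (U i a k x) * U i a k x'
      = (x == x')%:R) ->
  ftr (fun a a' => \sum_(i < n) Kmap (U i) c M a a') = c * ftr M.
Proof.
move=> hU; rewrite ftr_sum.
under eq_bigr => i _ do rewrite Kmap_tr.
rewrite -mulr_sumr -(delta_ftr M hU); congr (_ * _).
rewrite exchange_big; apply: eq_bigr => x _.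
rewrite exchange_big; apply: eq_bigr => x' _.
by rewrite mulr_sumr.
Qed.

Lemma sum_bij n (s t : 'I_n -> nat) l
   (f : 'I_l -> {i : 'I_n & ('I_(s i) * 'I_(t i))%type}) (F : forall i : 'I_n, 'I_(s i) -> 'I_(t i) -> C) :
  bijective f ->
  \sum_(k < l) (let: existT i st := f k in F i st.1 st.2) =
  \sum_(i < n) \sum_(a < s i) \sum_(b < t i) F i a b.
Proof.
move=> bf.
transitivity (\sum_(p : {i : 'I_n & ('I_(s i) * 'I_(t i))%type}) (let: existT i st := p in F i st.1 st.2)).
  by rewrite (reindex f) //=; apply: onW_bij.
transitivity (\sum_(i < n) \sum_(st : ('I_(s i) * 'I_(t i))%type) F i st.1 st.2); last first.
  by apply: eq_bigr => i _; rewrite pair_bigA.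
rewrite (sig_big_dep xpredT (fun i => xpredT) (fun i st => F i st.1 st.2)) /=.
by apply: eq_bigr => -[i st].
Qed.

Lemma sum_mul2 (I J : finType) (c d m : C) (f : I -> C) (g : J -> C) :
  m * (c * \sum_i f i) * (d * \sum_j g j) = \sum_i \sum_j c * d * m * f i * g j.
Proof.
rewrite [c * _]mulr_sumr [m * _]mulr_sumr mulr_suml; apply: eq_bigr => i _.
rewrite [d * _]mulr_sumr mulr_sumr; apply: eq_bigr => j _; ring.
Qed.

Lemma tensor_Kmap (X Y A B : finType) sK (K : A -> 'I_sK -> X -> C)
   sL (L : B -> 'I_sL -> Y -> C) c d (M : fmx R (X * Y)%type) ab ab' :
  tensor_map (Kmap K c) (Kmap L d) M ab ab' =
  \sum_x \sum_x' \sum_y \sum_y' \sum_k \sum_k'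
     c * d * M (x, y) (x', y') * (conjc (K ab.1 k x) * K ab'.1 k x')
       * (conjc (L ab.2 k' y) * L ab'.2 k' y').
Proof.
rewrite /tensor_map; apply: eq_bigr => x _; apply: eq_bigr => x' _.
apply: eq_bigr => y _; apply: eq_bigr => y' _.
rewrite !Kmap_munit sum_mul2; apply: eq_bigr => k _; apply: eq_bigr => k' _; ring.
Qed.

Definition genW (X Y A B : finType) n (s t : 'I_n -> nat)
   (U : forall i : 'I_n, A -> 'I_(s i) -> X -> C)
   (V : forall i : 'I_n, B -> 'I_(t i) -> Y -> C)
   l (f : 'I_l -> {i : 'I_n & ('I_(s i) * 'I_(t i))%type}) : boi R (X * Y)%type (A * B)%type :=
  @Boi R (X * Y)%type (A * B)%type 1 l
              (fun ab xy => \matrix_(k < l, j < 1)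
                 let: existT i st := f k in
                 U i ab.1 st.1 xy.1 * V i ab.2 st.2 xy.2).

Lemma genW_entry (X Y A B : finType) n (s t : 'I_n -> nat)
   (U : forall i : 'I_n, A -> 'I_(s i) -> X -> C)
   (V : forall i : 'I_n, B -> 'I_(t i) -> Y -> C)
   l (f : 'I_l -> {i : 'I_n & ('I_(s i) * 'I_(t i))%type}) ab ab' z z' :
  bijective f ->
  (adjmx (bW (genW U V f) ab z) *m bW (genW U V f) ab' z') 0 0 =
  \sum_(i < n) \sum_(a < s i) \sum_(b < t i)
     conjc (U i ab.1 a z.1 * V i ab.2 b z.2) * (U i ab'.1 a z'.1 * V i ab'.2 b z'.2).
Proof.
move=> bf; rewrite -(sum_bij (fun i a b => conjc (U i ab.1 a z.1 * V i ab.2 b z.2) * (U i ab'.1 a z'.1 * V i ab'.2 b z'.2)) bf).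
rewrite mxE; apply: eq_bigr => k _; rewrite /adjmx /= !mxE.
by case: (f k).
Qed.

Lemma genW_gamma (X Y A B : finType) n (s t : 'I_n -> nat)
   (U : forall i : 'I_n, A -> 'I_(s i) -> X -> C)
   (V : forall i : 'I_n, B -> 'I_(t i) -> Y -> C)
   l (f : 'I_l -> {i : 'I_n & ('I_(s i) * 'I_(t i))%type}) (M : fmx R (X * Y)%type) ab ab' :
  bijective f ->
  \sum_z \sum_z' M z z' * (adjmx (bW (genW U V f) ab z) *m bW (genW U V f) ab' z') 0 0 =
  \sum_(i < n) tensor_map (Kmap (U i) 1) (Kmap (V i) 1) M ab ab'.
Proof.
move=> bf.
transitivity (\sum_x \sum_y \sum_x' \sum_y' \sum_(i < n) \sum_(a < s i) \sum_(b < t i)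
   M (x, y) (x', y') * (conjc (U i ab.1 a x * V i ab.2 b y) * (U i ab'.1 a x' * V i ab'.2 b y'))).
  rewrite sum_pair; apply: eq_bigr => x _; apply: eq_bigr => y _.
  rewrite sum_pair; apply: eq_bigr => x' _; apply: eq_bigr => y' _.
  rewrite genW_entry // mulr_sumr; apply: eq_bigr => i _.
  rewrite mulr_sumr; apply: eq_bigr => a _.
  by rewrite mulr_sumr.
rewrite ex5; apply: eq_bigr => i _.
rewrite tensor_Kmap; apply: eq_bigr => x _.
rewrite exchange_big; apply: eq_bigr => x' _.
apply: eq_bigr => y _; apply: eq_bigr => y' _.
apply: eq_bigr => a _; apply: eq_bigr => b _.
by rewrite rmorphM /=; ring.
Qed.

Lemma genW_isom (X Y A B : finType) n (s t : 'I_n -> nat)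
   (U : forall i : 'I_n, A -> 'I_(s i) -> X -> C)
   (V : forall i : 'I_n, B -> 'I_(t i) -> Y -> C)
   l (f : 'I_l -> {i : 'I_n & ('I_(s i) * 'I_(t i))%type}) :
  bijective f ->
  (forall x x' : X,
           \sum_(i < n) \sum_(a : A) \sum_(k : 'I_(s i))
              conjc (U i a k x) * U i a k x' = (x == x')%:R) ->
  (forall (i : 'I_n) (y y' : Y),
           \sum_(b : B) \sum_(k : 'I_(t i))
              conjc (V i b k y) * V i b k y' = (y == y')%:R) ->
  is_isom (genW U V f).
Proof.
move=> bf hU hV [x y] [x' y']; apply/matrixP => p q; rewrite !ord1 summxE.
under eq_bigr => ab _ do rewrite genW_entry //.
rewrite !mxE eqxx mulr1n xpair_eqE /=.
transitivity (\sum_(i < n) \sum_a \sum_(k : 'I_(s i))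
     conjc (U i a k x) * U i a k x' * (y == y')%:R); last first.
  by rewrite -mulnb natrM -(hU x x') mulr_suml; apply: eq_bigr => i _; rewrite mulr_suml;
     apply: eq_bigr => a _; rewrite mulr_suml.
rewrite sum_pair ex3; apply: eq_bigr => i _; apply: eq_bigr => a _.
rewrite exchange_big; apply: eq_bigr => k _ /=.
rewrite -(hV i y y') mulr_sumr; apply: eq_bigr => b _.
rewrite mulr_sumr; apply: eq_bigr => k' _.
by rewrite rmorphM /=; ring.
Qed.

Lemma adjmx0 m n : adjmx (0 : 'M[C]_(m, n)) = 0.
Proof. by apply/matrixP => i j; rewrite !mxE conjc0. Qed.

Lemma adjmx_block m1 m2 n1 n2 (a : 'M[C]_(m1, n1)) (b : 'M[C]_(m1, n2))
   (c : 'M[C]_(m2, n1)) (d : 'M[C]_(m2, n2)) :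
  adjmx (block_mx a b c d) = block_mx (adjmx a) (adjmx c) (adjmx b) (adjmx d).
Proof. by rewrite /adjmx map_block_mx tr_block_mx. Qed.

Lemma adj_mul_diag m1 m2 n1 n2 p1 p2 (a : 'M[C]_(m1, n1)) (d : 'M[C]_(m2, n2))
   (a' : 'M[C]_(m1, p1)) (d' : 'M[C]_(m2, p2)) :
  adjmx (block_mx a 0 0 d) *m block_mx a' 0 0 d' =
  block_mx (adjmx a *m a') 0 0 (adjmx d *m d').
Proof.
by rewrite adjmx_block !adjmx0 mulmx_block !mulmx0 !mul0mx !addr0 !add0r.
Qed.

Lemma sum_block (I : finType) m1 m2 n1 n2 (P : I -> 'M[C]_(m1, n1)) (Q : I -> 'M[C]_(m2, n2)) :
  \sum_i block_mx (P i) 0 0 (Q i) = block_mx (\sum_i P i) 0 0 (\sum_i Q i).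
Proof.
apply: (big_rec3 (fun a b c => a = block_mx b 0 0 c)); first by rewrite block_mx0.
by move=> i a b c _ ->; rewrite add_block_mx !addr0.
Qed.

Lemma dsum_isom (Z Cc : finType) (W1 W2 : boi R Z Cc) :
  is_isom W1 -> is_isom W2 -> is_isom (dsum W1 W2).
Proof.
move=> h1 h2 z z'; rewrite /dsum /=.
under eq_bigr => c _ do rewrite adj_mul_diag.
by rewrite sum_block h1 h2 -scalar_mx_block.
Qed.

Definition posf h (sigma : 'M[C]_h -> C) :=
  (forall (a : C) (T T' : 'M[C]_h), sigma (a *: T + T') = a * sigma T + sigma T') /\
  (forall T : 'M[C]_h, 0 <= sigma (adjmx T *m T)).

Definition Decomp (X Y A B : finType) (G : fmx R (X * Y)%type -> fmx R (A * B)%type) (p : C) :=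
  exists (n : nat) (Psi : 'I_n -> fmx R X -> fmx R A) (Phi : 'I_n -> fmx R Y -> fmx R B),
    [/\ (forall i, cp_map (Psi i)),
        (forall M, ftr (fun a a' => \sum_(i < n) Psi i M a a') = p * ftr M),
        (forall i, qchannel (Phi i)) &
        chan_eq G (fun M ab ab' => \sum_(i < n) tensor_map (Psi i) (Phi i) M ab ab')].

Lemma decomp_ext (X Y A B : finType) (G G' : fmx R (X * Y)%type -> fmx R (A * B)%type) p :
  (forall M ab ab', G M ab ab' = G' M ab ab') -> Decomp G p -> Decomp G' p.
Proof.
move=> e [n [Psi [Phi [h1 h2 h3 h4]]]]; exists n, Psi, Phi; split => // M ab ab'.
by rewrite -e h4.
Qed.

Lemma split_l m n (j : 'I_m) : split (lshift n j) = inl j.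
Proof. exact: (unsplitK (inl _ j)). Qed.

Lemma split_r m n (j : 'I_n) : split (rshift m j) = inr j.
Proof. exact: (unsplitK (inr _ j)). Qed.

Lemma decomp_sum (X Y A B : finType) (G1 G2 : fmx R (X * Y)%type -> fmx R (A * B)%type) p1 p2 :
  Decomp G1 p1 -> Decomp G2 p2 ->
  Decomp (fun M ab ab' => G1 M ab ab' + G2 M ab ab') (p1 + p2).
Proof.
move=> [n1 [Psi1 [Phi1 [a1 b1 c1 d1]]]] [n2 [Psi2 [Phi2 [a2 b2 c2 d2]]]].
exists (n1 + n2)%N, (fun i => match split i with inl j => Psi1 j | inr j => Psi2 j end),
  (fun i => match split i with inl j => Phi1 j | inr j => Phi2 j end); split.
- by move=> i; case: (split i).
- move=> M; rewrite ftr_sum big_split_ord /=.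
  under eq_bigr => j _ do rewrite split_l.
  under [X in _ + X]eq_bigr => j _ do rewrite split_r.
  by rewrite -!ftr_sum b1 b2 mulrDl.
- by move=> i; case: (split i).
- move=> M ab ab'; rewrite big_split_ord /=.
  under eq_bigr => j _ do rewrite split_l.
  under [X in _ = _ + X]eq_bigr => j _ do rewrite split_r.
  by rewrite -d1 -d2.
Qed.

Lemma Kmap_scale (I J : finType) s (K : J -> 'I_s -> I -> C) c N a a' :
  Kmap K c N a a' = c * Kmap K 1 N a a'.
Proof. by rewrite /Kmap mul1r. Qed.

Lemma tensor_scale (X Y A B : finType) sK (K : A -> 'I_sK -> X -> C)
   (Phi : fmx R Y -> fmx R B) c (M : fmx R (X * Y)%type) ab ab' :
  tensor_map (Kmap K c) Phi M ab ab' = c * tensor_map (Kmap K 1) Phi M ab ab'.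
Proof.
rewrite /tensor_map mulr_sumr; apply: eq_bigr => x _.
rewrite mulr_sumr; apply: eq_bigr => x' _.
rewrite mulr_sumr; apply: eq_bigr => y _.
rewrite mulr_sumr; apply: eq_bigr => y' _.
rewrite Kmap_scale; ring.
Qed.

Lemma posf0 h (sigma : 'M[C]_h -> C) : posf sigma -> sigma 0 = 0.
Proof.
case=> hl _; have := hl 1 0 0; rewrite scaler0 addr0 mul1r.
by move/(congr1 (fun z => z - sigma 0)); rewrite subrr addrK => <-.
Qed.

Lemma posfD h (sigma : 'M[C]_h -> C) T T' : posf sigma -> sigma (T + T') = sigma T + sigma T'.
Proof. by case=> hl _; rewrite -[T]scale1r hl mul1r scale1r. Qed.

Lemma gen_decomp (X Y A B : finType) n (s t : 'I_n -> nat)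
   (U : forall i : 'I_n, A -> 'I_(s i) -> X -> C)
   (V : forall i : 'I_n, B -> 'I_(t i) -> Y -> C)
   l (f : 'I_l -> {i : 'I_n & ('I_(s i) * 'I_(t i))%type}) :
  bijective f ->
  (forall x x' : X,
           \sum_(i < n) \sum_(a : A) \sum_(k : 'I_(s i))
              conjc (U i a k x) * U i a k x' = (x == x')%:R) ->
  (forall (i : 'I_n) (y y' : Y),
           \sum_(b : B) \sum_(k : 'I_(t i))
              conjc (V i b k y) * V i b k y' = (y == y')%:R) ->
  forall sigma : 'M[C]_1 -> C, posf sigma ->
  Decomp (GammaW (W := genW U V f) sigma) (sigma 1%:M).
Proof.
move=> bf hU hV sigma hs.
have h0 := posf0 hs.
have hT : forall T : 'M[C]_1, sigma T = T 0 0 * sigma 1%:M.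
  move=> T; case: hs => hl _.
  have -> : T = T 0 0 *: 1%:M + 0.
    by apply/matrixP => i j; rewrite !ord1 !mxE eqxx mulr1n addr0 mulr1.
  by rewrite hl h0 addr0 !mxE eqxx mulr1n addr0 mulr1.
have hp : 0 <= sigma 1%:M.
  have := proj2 hs 1%:M.
  have -> : adjmx (1%:M : 'M[C]_1) *m 1%:M = 1%:M.
    by rewrite mulmx1; apply/matrixP => i j; rewrite !ord1 !mxE eqxx mulr1n conjc1.
  done.
exists n, (fun i => Kmap (U i) (sigma 1%:M)), (fun i => Kmap (V i) 1); split.
- by move=> i; apply: Kmap_cp.
- by move=> M; apply: Kmap_tr_sum.
- by move=> i; apply: Kmap_qchannel.
- move=> M ab ab'; rewrite /GammaW.
  under [in RHS]eq_bigr => i _ do rewrite tensor_scale.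
  rewrite -mulr_sumr -(genW_gamma U V M ab ab' bf) mulr_sumr; apply: eq_bigr => z _.
  rewrite mulr_sumr; apply: eq_bigr => z' _.
  rewrite hT; ring.
Qed.

Lemma dsum_gamma (Z Cc : finType) (W1 W2 : boi R Z Cc)
   (sigma : 'M[C]_(bh W1 + bh W2) -> C) M c c' :
  posf sigma ->
  GammaW (W := dsum W1 W2) sigma M c c' =
  GammaW (W := W1) (fun T => sigma (block_mx T 0 0 0)) M c c' +
  GammaW (W := W2) (fun T => sigma (block_mx 0 0 0 T)) M c c'.
Proof.
move=> hs; rewrite /GammaW -big_split; apply: eq_bigr => z _.
rewrite -big_split; apply: eq_bigr => z' _ /=.
rewrite -mulrDr /dsum /= adj_mul_diag -posfD //.
by rewrite add_block_mx !addr0 add0r.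
Qed.

Lemma posf_l h1 h2 (sigma : 'M[C]_(h1 + h2) -> C) :
  posf sigma -> posf (fun T : 'M[C]_h1 => sigma (block_mx T 0 0 (0 : 'M[C]_h2))).
Proof.
move=> hs; split.
  move=> a T T'; rewrite -(proj1 hs); congr sigma.
  by rewrite scale_block_mx add_block_mx !scaler0 !addr0.
move=> T; have := proj2 hs (block_mx T 0 0 (0 : 'M[C]_h2)).
by rewrite adj_mul_diag adjmx0 mul0mx.
Qed.

Lemma posf_r h1 h2 (sigma : 'M[C]_(h1 + h2) -> C) :
  posf sigma -> posf (fun T : 'M[C]_h2 => sigma (block_mx (0 : 'M[C]_h1) 0 0 T)).
Proof.
move=> hs; split.
  move=> a T T'; rewrite -(proj1 hs); congr sigma.
  by rewrite scale_block_mx add_block_mx !scaler0 !addr0.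
move=> T; have := proj2 hs (block_mx (0 : 'M[C]_h1) 0 0 T).
by rewrite adj_mul_diag adjmx0 mul0mx.
Qed.

Lemma Rlowc_decomp (X Y A B : finType) (W : boi R (X * Y)%type (A * B)%type) :
  Rlowc W -> forall sigma : 'M[C]_(bh W) -> C, posf sigma ->
  Decomp (GammaW sigma) (sigma 1%:M).
Proof.
elim => [{}W [n [s [t [U [V [l [f [bf hU hV ->]]]]]]]] | W1 W2 _ IH1 _ IH2] sigma hs.
  exact: gen_decomp.
have e1 : sigma 1%:M = sigma (block_mx 1%:M 0 0 0) + sigma (block_mx 0 0 0 1%:M).
  by rewrite -posfD // add_block_mx !addr0 add0r -scalar_mx_block.
rewrite e1.
apply: (decomp_ext (G := fun M ab ab' => GammaW (W := W1) (fun T => sigma (block_mx T 0 0 0)) M ab ab' +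
  GammaW (W := W2) (fun T => sigma (block_mx 0 0 0 T)) M ab ab')).
  by move=> M ab ab'; rewrite dsum_gamma.
apply: decomp_sum; [apply: IH1; exact: posf_l | apply: IH2; exact: posf_r].
Qed.

Lemma Rlowc_isom (X Y A B : finType) (W : boi R (X * Y)%type (A * B)%type) :
  Rlowc W -> is_isom W.
Proof.
elim => [{}W [n [s [t [U [V [l [f [bf hU hV ->]]]]]]]] | W1 W2 _ IH1 _ IH2].
  exact: genW_isom.
exact: dsum_isom.
Qed.

Lemma ind_isom (A X : finType) m (a0 : A) (g : X -> 'I_m) (ginj : injective g) x x' :
  \sum_a \sum_(k : 'I_m) conjc (((a == a0) && (k == g x))%:R) * ((a == a0) && (k == g x'))%:R
  = (x == x')%:R :> C.
Proof.
under eq_bigr => a _ do under eq_bigr => k _ do rewrite conjc_nat.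
by rewrite (sum_delta_pair a0 (g x) (fun a k => ((a == a0) && (k == g x'))%:R)) eqxx (inj_eq ginj).
Qed.

Lemma Rlowc_sep (X Y A B : finType) (S : (X * Y)%type -> (A * B)%type -> C) :
  (exists z c, S z c != 0) ->
  exists W : boi R (X * Y)%type (A * B)%type, Rlowc W /\ phiW W S != 0.
Proof.
move=> [[x1 y1] [[a0 b0] hS]].
pose s := fun _ : 'I_1 => #|X|.
pose t := fun _ : 'I_1 => #|Y|.
pose U := fun (i : 'I_1) (a : A) (k : 'I_(s i)) (x : X) =>
   ((a == a0) && (k == enum_rank x :> 'I_#|X|))%:R : C.
pose V := fun (i : 'I_1) (b : B) (k : 'I_(t i)) (y : Y) =>
   ((b == b0) && (k == enum_rank y :> 'I_#|Y|))%:R : C.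
pose T : finType := {i : 'I_1 & ('I_(s i) * 'I_(t i))%type}.
pose f : 'I_#|T| -> T := enum_val.
have bf : bijective f := @enum_val_bij T.
exists (genW U V f); split.
  apply: Rlowc_gen; exists 1%N, s, t, U, V, #|T|, f; split => //.
    move=> x x'; rewrite big_ord1.
    exact: (ind_isom (g := fun x => (enum_rank x : 'I_#|X|)) a0 (@enum_rank_inj X)).
  move=> i y y'.
  exact: (ind_isom (g := fun y => (enum_rank y : 'I_#|Y|)) b0 (@enum_rank_inj Y)).
pose k0 := enum_rank (existT (fun i : 'I_1 => ('I_(s i) * 'I_(t i))%type) ord0
   ((enum_rank x1 : 'I_#|X|), (enum_rank y1 : 'I_#|Y|)) : T).
have E : (phiW (genW U V f) S) k0 ord0 = S (x1, y1) (a0, b0).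
  rewrite /phiW summxE.
  transitivity (\sum_z \sum_c S z c * ((z == (x1, y1))%:R * (c == (a0, b0))%:R)).
    apply: eq_bigr => -[x y] _; rewrite summxE; apply: eq_bigr => -[a b] _.
    rewrite !mxE /k0 /f enum_rankK /U /V /=.
    rewrite !(inj_eq enum_rank_inj) !xpair_eqE -!natrM; congr (_ * _%:R).
    by rewrite !(eq_sym x1) !(eq_sym y1); do 4 case: (_ == _).
  rewrite -(sum_delta (x1, y1) (fun z => S z (a0, b0))); apply: eq_bigr => z _.
  rewrite -(sum_delta2 (a0, b0) (fun c => (z == (x1, y1))%:R * S z c)).
  by apply: eq_bigr => c _; ring.
by apply/eqP => h; move: hS; rewrite -E h mxE eqxx.
Qed.

Definition psdm N (P : 'M[C]_N) :=
  forall u : 'I_N -> C, 0 <= \sum_p \sum_q conjc (u p) * P p q * u q.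

Lemma sum_dd (I : finType) (a b : I) (g : I -> I -> C) :
  \sum_p \sum_q (p == a)%:R * (q == b)%:R * g p q = g a b.
Proof.
rewrite -(sum_delta_pair a b g); apply: eq_bigr => p _; apply: eq_bigr => q _.
by rewrite -natrM mulnb.
Qed.


Lemma quad2 N (P : 'M[C]_N) i j (l : C) :
  \sum_p \sum_q conjc ((p == i)%:R + l * (p == j)%:R) * P p q * ((q == i)%:R + l * (q == j)%:R)
  = P i i + l * P i j + conjc l * P j i + conjc l * l * P j j.
Proof.
pose u := fun r : 'I_N => (r == i)%:R + l * (r == j)%:R.
transitivity (\sum_p \sum_q (
    (p == i)%:R * (q == i)%:R * P p q + (p == i)%:R * (q == j)%:R * (l * P p q)
  + (p == j)%:R * (q == i)%:R * (conjc l * P p q)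
  + (p == j)%:R * (q == j)%:R * (conjc l * l * P p q))).
  apply: eq_bigr => p _; apply: eq_bigr => q _.
  by rewrite /u rmorphD rmorphM /= !conjc_nat; ring.
under eq_bigr => p _ do rewrite !big_split /=.
rewrite !big_split /=.
by rewrite !(sum_dd _ _ (fun p q => P p q)) !(sum_dd _ _ (fun p q => l * P p q))
   !(sum_dd _ _ (fun p q => conjc l * P p q)) !(sum_dd _ _ (fun p q => conjc l * l * P p q)).
Qed.

Lemma herm_alg (A a Bc b Cc c D d i : C) :
  i * i = -1 -> A = a -> D = d ->
  A + Bc + Cc + D = a + b + c + d ->
  A + (- i) * Bc + i * Cc + i * (- i) * D = a + i * b + (- i) * c + (- i) * i * d ->
  Bc = c.
Proof.
move=> hi ha hd h1 h2.
have two : (2 : C) != 0 by rewrite pnatr_eq0.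
apply: (mulfI two); apply/eqP; rewrite -subr_eq0; apply/eqP.
transitivity ((A + Bc + Cc + D - (a + b + c + d))
   + i * (A + (- i) * Bc + i * Cc + i * (- i) * D - (a + i * b + (- i) * c + (- i) * i * d))
   - (1 + i) * (A - a) - (1 + i - i * (i * i + 1)) * (D - d)
   + (i * i + 1) * (Bc - Cc + b - c)); first by ring.
by rewrite h1 h2 ha hd hi; ring.
Qed.

Lemma psd_herm N (P : 'M[C]_N) : psdm P -> forall i j, P j i = conjc (P i j).
Proof.
move=> hP i j.
have hQ : forall i j l, conjc (P i i + l * P i j + conjc l * P j i + conjc l * l * P j j)
   = P i i + l * P i j + conjc l * P j i + conjc l * l * P j j.
  move=> i' j' l; apply: ge0_conj; rewrite -quad2.
  exact: (hP (fun r => (r == i')%:R + l * (r == j')%:R)).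
have ha : conjc (P i i) = P i i.
  by have := hQ i j 0; rewrite !(conjc0, mul0r, addr0).
have hd : conjc (P j j) = P j j.
  by have := hQ j j 0; rewrite !(conjc0, mul0r, addr0).
have h1 := hQ i j 1; rewrite conjc1 !mul1r !rmorphD /= in h1.
have ci : conjc 'i = - 'i :> C := @conjCi C.
have hi : 'i * 'i = -1 :> C by rewrite -expr2 sqrCi.
move: ci hi (hQ i j 'i); generalize ('i : C) => w cw hw h2.
rewrite cw !rmorphD !rmorphM /= !rmorphN /= cw opprK in h2.
symmetry; exact: (herm_alg hw ha hd h1 h2).
Qed.

Definition Gm N (P : 'M[C]_N) : 'M[C]_N :=
  \matrix_(k, p) (sqrtC (spectral_diag P 0 k) * spectralmx P k p).

Lemma factor_mx N (P : 'M[C]_N) : psdm P ->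
  forall p q, P p q = \sum_k conjc (Gm P k p) * Gm P k q.
Proof.
move=> hP.
have herm : P \is hermsymmx.
  apply/is_hermitianmxP; rewrite expr0 scale1r; apply/matrixP => i j; rewrite !mxE.
  exact: psd_herm.
have /orthomx_spectralP eP := hermitian_normalmx herm.
have uU := spectral_unitarymx P.
have UU := unitarymxP uU.
rewrite invmx_unitary // in eP.
set U := spectralmx P in eP uU UU *.
set d := spectral_diag P in eP *.
have dk : forall k, 0 <= d 0 k.
  move=> k.
  have <- : (U *m P *m U ^t conjC) k k = d 0 k.
    rewrite {1}eP !mulmxA UU mul1mx -!mulmxA UU mulmx1 mxE eqxx mulr1n //.
  have := hP (fun q => conjc (U k q)).
  suff -> : \sum_p \sum_q conjc (conjc (U k p)) * P p q * conjc (U k q)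
       = (U *m P *m U ^t conjC) k k by [].
  rewrite mxE exchange_big; apply: eq_bigr => q _.
  rewrite !mxE mulr_suml; apply: eq_bigr => p _.
  by rewrite conjcK.
move=> p q; rewrite {1}eP mxE; apply: eq_bigr => k _.
rewrite mul_mx_diag !mxE -/U -/d.
have cc : forall x : C, conjC x = conjc x := fun x => erefl.
have hs : conjc (sqrtC (d 0 k)) = sqrtC (d 0 k) by apply: ge0_conj; rewrite sqrtC_ge0.
rewrite rmorphM /= hs cc.
transitivity (conjc (U k p) * (sqrtC (d 0 k) * sqrtC (d 0 k)) * U k q).
  by rewrite -expr2 sqrtCK.
ring.
Qed.

Definition Gfin (T : finType) (P : T -> T -> C) : 'I_#|T| -> T -> C :=
  fun k p => Gm (\matrix_(i, j) P (enum_val i) (enum_val j)) k (enum_rank p).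

Lemma factor_fin (T : finType) (P : T -> T -> C) : psd P ->
  forall p q, P p q = \sum_k conjc (Gfin P k p) * Gfin P k q.
Proof.
move=> hP p q.
set PM : 'M[C]_#|T| := \matrix_(i, j) P (enum_val i) (enum_val j).
have hPM : psdm PM.
  move=> u; have := hP (fun p => u (enum_rank p)).
  suff -> : \sum_p \sum_q conjc (u p) * PM p q * u q =
     \sum_i \sum_j conjc (u (enum_rank i)) * P i j * u (enum_rank j) by [].
  rewrite (reindex (@enum_rank T)) /=; last by apply: onW_bij; exact: enum_rank_bij.
  apply: eq_bigr => i _.
  rewrite (reindex (@enum_rank T)) /=; last by apply: onW_bij; exact: enum_rank_bij.
  by apply: eq_bigr => j _; rewrite mxE !enum_rankK.
have -> : P p q = PM (enum_rank p) (enum_rank q) by rewrite mxE !enum_rankK.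
exact: factor_mx.
Qed.

Definition ChoiP (X A : finType) (Psi : fmx R X -> fmx R A) :
  (A * 'I_#|X|)%type -> (A * 'I_#|X|)%type -> C :=
  fun p q => Psi (munit R (enum_val p.2) (enum_val q.2)) p.1 q.1.

Lemma choi_psd (X A : finType) (Psi : fmx R X -> fmx R A) : cp_map Psi -> psd (ChoiP Psi).
Proof.
case=> _ hcp.
pose M0 : fmx R (X * 'I_#|X|)%type :=
  fun p q => munit R (enum_val p.2) (enum_val q.2) p.1 q.1.
have hM0 : psd M0.
  move=> v.
  rewrite (_ : \sum_p \sum_q conjc (v p) * M0 p q * v q = \sum_(j : 'I_#|X|) \sum_(j' : 'I_#|X|) \sum_x \sum_x'
     ((x == enum_val j) && (x' == enum_val j'))%:R * (conjc (v (x, j)) * v (x', j')));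
    last first.
    rewrite sum_pair exchange_big; apply: eq_bigr => j _.
    under eq_bigr => x _ do rewrite sum_pair.
    rewrite ex3; apply: eq_bigr => j' _; apply: eq_bigr => x _; apply: eq_bigr => x' _.
    by rewrite /M0 /munit /=; ring.
  under eq_bigr => j _ do under eq_bigr => j' _ do rewrite sum_delta_pair.
  rewrite -[X in _ <= X](_ : conjc (\sum_j v (enum_val j, j)) * (\sum_j v (enum_val j, j)) = _).
    exact: mul_conj_ge0.
  rewrite rmorph_sum mulr_suml; apply: eq_bigr => j _.
  by rewrite mulr_sumr.
exact: (hcp _ M0 hM0).
Qed.

Definition KrausOf (X A : finType) (Psi : fmx R X -> fmx R A) :
  A -> 'I_#|{: A * 'I_#|X|}| -> X -> C :=
  fun a k x => Gfin (ChoiP Psi) k (a, enum_rank x).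

Lemma kraus_prop (X A : finType) (Psi : fmx R X -> fmx R A) : cp_map Psi ->
  forall x x' a a', Psi (munit R x x') a a' =
     \sum_k conjc (KrausOf Psi a k x) * KrausOf Psi a' k x'.
Proof.
move=> h x x' a a'.
have := factor_fin (choi_psd h) (a, enum_rank x) (a', enum_rank x').
by rewrite /ChoiP /= !enum_rankK.
Qed.

Lemma ftr_munit (I : finType) (x x' : I) : ftr (munit R x x') = (x == x')%:R.
Proof.
rewrite /ftr /munit; under eq_bigr => u _ do rewrite -mulnb natrM.
exact: (sum_delta x (fun u => (u == x')%:R)).
Qed.

Lemma tensor_eq (X Y A B : finType) (Psi Psi' : fmx R X -> fmx R A) (Phi Phi' : fmx R Y -> fmx R B) M ab ab' :
  (forall x x' a a', Psi (munit R x x') a a' = Psi' (munit R x x') a a') ->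
  (forall y y' b b', Phi (munit R y y') b b' = Phi' (munit R y y') b b') ->
  tensor_map Psi Phi M ab ab' = tensor_map Psi' Phi' M ab ab'.
Proof.
move=> h1 h2; rewrite /tensor_map; apply: eq_bigr => x _; apply: eq_bigr => x' _.
apply: eq_bigr => y _; apply: eq_bigr => y' _; by rewrite h1 h2.
Qed.

Lemma Kmap_kraus (X A : finType) (Psi : fmx R X -> fmx R A) : cp_map Psi ->
  forall x x' a a', Psi (munit R x x') a a' = Kmap (KrausOf Psi) 1 (munit R x x') a a'.
Proof. by move=> h x x' a a'; rewrite Kmap_munit mul1r kraus_prop. Qed.

End P.

Theorem proposition5p10 (R : realType) (X Y A B : finType) :
  (0 < #|X|)%N -> (0 < #|Y|)%N -> (0 < #|A|)%N -> (0 < #|B|)%N ->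
  resource (@Rlowc R X Y A B) /\
  (forall G : fmx R (X * Y)%type -> fmx R (A * B)%type, QC (@Rlowc R X Y A B) G <-> Qlowc G).
Proof.
move=> _ _ _ _; split.
  split.
  - by move=> W; apply: Rlowc_isom.
  - by move=> W1 W2 h1 h2; apply: Rlowc_sum.
  - exact: Rlowc_sep.
move=> G; split.
  case=> W [hW [sigma [[hl hpos h1] hG]]].
  have := Rlowc_decomp hW (conj hl hpos); rewrite h1 => -[n [Psi [Phi [a b c d]]]].
  exists n, Psi, Phi; split => //.
    by move=> M; rewrite b mul1r.
  by move=> M i j; rewrite hG d.
case=> n [Psi [Phi [hPsi htp hPhi hG]]].
pose s := fun _ : 'I_n => #|{: A * 'I_#|X|}|.
pose t := fun _ : 'I_n => #|{: B * 'I_#|Y|}|.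
pose U := fun i : 'I_n => (KrausOf (Psi i) : A -> 'I_(s i) -> X -> R[i]).
pose V := fun i : 'I_n => (KrausOf (Phi i) : B -> 'I_(t i) -> Y -> R[i]).
pose T : finType := {i : 'I_n & ('I_(s i) * 'I_(t i))%type}.
pose f : 'I_#|T| -> T := enum_val.
have bf : bijective f := @enum_val_bij T.
have hU : forall x x' : X, \sum_(i < n) \sum_(a : A) \sum_(k : 'I_(s i))
              conjc (U i a k x) * U i a k x' = (x == x')%:R.
  move=> x x'; rewrite -ftr_munit -(htp (munit R x x')) /ftr exchange_big.
  apply: eq_bigr => i _; apply: eq_bigr => a _.
  by rewrite kraus_prop.
have hV : forall (i : 'I_n) (y y' : Y), \sum_(b : B) \sum_(k : 'I_(t i))
              conjc (V i b k y) * V i b k y' = (y == y')%:R.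
  move=> i y y'; rewrite -ftr_munit -(proj2 (hPhi i) (munit R y y')) /ftr.
  apply: eq_bigr => b _.
  by rewrite kraus_prop //; case: (hPhi i).
exists (genW U V f); split.
  by apply: Rlowc_gen; exists n, s, t, U, V, #|T|, f; split.
exists (fun T : 'M[R[i]]_1 => T 0 0); split.
  split.
  - by move=> a T1 T2; rewrite !mxE.
  - move=> T1; rewrite mxE; apply: sumr_ge0 => k _; rewrite !mxE.
    exact: mul_conj_ge0.
  - by rewrite mxE.
move=> M ab ab'; rewrite hG /GammaW (genW_gamma U V M ab ab' bf).
apply: eq_bigr => i _; apply: tensor_eq => x x' a a'.
  exact: Kmap_kraus.
by apply: Kmap_kraus; case: (hPhi i).
Qed.
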